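(* For any $F\in\mathscr{F}_{\mathrm{AIFV}}$: (i) $\mathcal{P}^1_{F,0}=\mathcal{P}^1_{F,1}=\{0,1\}$; (ii) for any $i\in\{0,1\}$ and $b\in\mathcal{C}$, if $\mathcal{S}_{F,i}(\lambda)=\emptyset$ and $(i,b)\ne(1,0)$, then $\mathcal{P}^1_{F,i}(b)=\{0,1\}$; (iii) for any $i\in\{0,1\}$ and $s\in\mathcal{S}$, if $\bar{\mathcal{P}}^0_{F,i}(f_i(s))\ne\emptyset$, then $\bar{\mathcal{P}}^2_{F,i}(f_i(s))=\{00\}$.
   Context: $\mathcal{S}$ is a finite source alphabet with $|\mathcal{S}|\ge 2$ and $\mathcal{C}=\{0,1\}$; $\mathcal{A}^k,\mathcal{A}^{\ast},\mathcal{A}^{+}$ are sequences of length $k$, finite, positive finite length; $\lambda$ empty sequence; $\preceq$ prefix, $\prec$ proper prefix; $\mathrm{suff}(x_1\cdots x_n)=x_2\cdots x_n$. A code-tuple $F$ with $m\ge1$ code tables consists of maps $f_i:\mathcal{S}\to\mathcal{C}^{\ast}$ and $\tau_i:\mathcal{S}\to\{0,\dots,m-1\}$, $i\in\{0,\dots,m-1\}$; $|F|=m$. $f_i^{\ast}(\lambda)=\lambda$, $f_i^{\ast}(\pmb{x})=f_i(x_1)f^{\ast}_{\tau_i(x_1)}(\mathrm{suff}(\pmb{x}))$. $\mathcal{S}_{F,i}(\pmb{b})=\{s:f_i(s)=\pmb{b}\}$. For integer $k\ge0$, $\pmb{b}\in\mathcal{C}^{\ast}$: $\mathcal{P}^k_{F,i}(\pmb{b})$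 is the set of $\pmb{c}\in\mathcal{C}^k$ such that some $\pmb{x}=x_1\cdots x_n\in\mathcal{S}^{+}$ has $f_i^{\ast}(\pmb{x})\succeq\pmb{b}\pmb{c}$ and $f_i(x_1)\succeq\pmb{b}$; $\bar{\mathcal{P}}^k_{F,i}(\pmb{b})$ the same with $f_i(x_1)\succ\pmb{b}$; $\mathcal{P}^k_{F,i}=\mathcal{P}^k_{F,i}(\lambda)$, $\bar{\mathcal{P}}^k_{F,i}=\bar{\mathcal{P}}^k_{F,i}(\lambda)$. $\mathscr{F}_{\mathrm{AIFV}}$ is the set of code-tuples $F$ with $|F|=2$ satisfying: (i) $f_0,f_1$ injective; (ii) for all $i\in\{0,1\}$, $s$: $1\notin\bar{\mathcal{P}}^1_{F,i}(f_i(s))$ and $1\notin\bar{\mathcal{P}}^1_{F,i}(f_i(s)0)$; (iii) $f_i(s')\ne f_i(s)0$ for all $i,s,s'$; (iv) $\tau_i(s)=0$ if $\bar{\mathcal{P}}^0_{F,i}(f_i(s))=\emptyset$, and $\tau_i(s)=1$ otherwise; (v) $f_1(s)\ne\lambda$ and $f_1(s)\ne0$ for all $s$; (vi) $0\notin\bar{\mathcal{P}}^1_{F,1}(0)$; (vii) for all $i\in\{0,1\}$, $\pmb{b}\in\mathcal{C}^{\ast}$ with $|\bar{\mathcal{P}}^1_{F,i}(\pmb{b})|=1$: either $f_i(s)\pmb{c}=\pmb{b}$ for some $s\in\mathcal{S}$, $\pmb{c}\in\mathcal{C}^0\cup\mathcal{C}^1$, or $(i,\pmb{b})=(1,0)$.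 *)

(* Defs.v *)
From mathcomp Require Import all_boot.
Set Implicit Arguments. Unset Strict Implicit. Unset Printing Implicit Defensive.

(* Code alphabet C = {0,1} is encoded as bool: 0 = false, 1 = true.
   Sequences over C are seq bool; lambda = [::]. *)

Record codeTuple (S : Type) (m : nat) := CodeTuple {
  ct_f   : 'I_m -> S -> seq bool;
  ct_tau : 'I_m -> S -> 'I_m }.

Definition i0 : 'I_2 := @Ordinal 2 0 erefl.
Definition i1 : 'I_2 := @Ordinal 2 1 erefl.

Fixpoint fstar (S : Type) (m : nat) (F : codeTuple S m) (i : 'I_m) (x : seq S)
  : seq bool :=
  match x with
  | [::] => [::]
  | x1 :: xs => ct_f F i x1 ++ fstar F (ct_tau F i x1) xs
  end.

Definition pprefix (s t : seq bool) : bool := prefix s t && (s != t).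

Definition Pk (S : Type) (m : nat) (F : codeTuple S m) (k : nat) (i : 'I_m)
  (b c : seq bool) : Prop :=
  size c = k /\
  exists (x1 : S) (xs : seq S),
    prefix (b ++ c) (fstar F i (x1 :: xs)) /\ prefix b (ct_f F i x1).

Definition Pbark (S : Type) (m : nat) (F : codeTuple S m) (k : nat) (i : 'I_m)
  (b c : seq bool) : Prop :=
  size c = k /\
  exists (x1 : S) (xs : seq S),
    prefix (b ++ c) (fstar F i (x1 :: xs)) /\ pprefix b (ct_f F i x1).

(* membership in the class F_AIFV (|F| = 2 is enforced by the type) *)
Definition AIFV (S : Type) (F : codeTuple S 2) : Prop :=
  (* (i) *)
  (forall i : 'I_2, injective (ct_f F i)) /\
  (* (ii) *)
  (forall (i : 'I_2) (s : S),
      ~ Pbark F 1 i (ct_f F i s) [:: true] /\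
      ~ Pbark F 1 i (ct_f F i s ++ [:: false]) [:: true]) /\
  (* (iii) *)
  (forall (i : 'I_2) (s s' : S), ct_f F i s' <> ct_f F i s ++ [:: false]) /\
  (* (iv) *)
  (forall (i : 'I_2) (s : S),
      ((forall c, ~ Pbark F 0 i (ct_f F i s) c) -> ct_tau F i s = i0) /\
      (~ (forall c, ~ Pbark F 0 i (ct_f F i s) c) -> ct_tau F i s = i1)) /\
  (* (v) *)
  (forall s : S, ct_f F i1 s <> [::] /\ ct_f F i1 s <> [:: false]) /\
  (* (vi) *)
  ~ Pbark F 1 i1 [:: false] [:: false] /\
  (* (vii) *)
  (forall (i : 'I_2) (b : seq bool),
      (exists c0, forall c, Pbark F 1 i b c <-> c = c0) ->
      (exists (s : S) (c : seq bool), size c <= 1 /\ ct_f F i s ++ c = b)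
      \/ (i = i1 /\ b = [:: false])).

(* Main.v *)
From Stdlib Require Import Classical.
Require Import Defs.
From mathcomp Require Import all_boot.
Set Implicit Arguments. Unset Strict Implicit.

Lemma pcat2 (b s t : seq bool) : prefix (b ++ s) (b ++ t) = prefix s t.
Proof. by rewrite prefix_catr // eqxx. Qed.

Lemma ord2 (j : 'I_2) : j = i0 \/ j = i1.
Proof.
case: j => [[|[|n]] H]; [left|right|by []]; exact: val_inj.
Qed.

Section S.
Variables (S : finType) (F : codeTuple S 2).

Definition Pall (j : 'I_2) (b : seq bool) :=
  forall c, Pk F 1 j b c <-> (c = [:: false] \/ c = [:: true]).

Lemma Pall_of j b : Pk F 1 j b [:: false] -> Pk F 1 j b [:: true] -> Pall j b.
Proof.
move=> H0 H1 c; split.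
  case=> sz _; case: c sz => [|x [|y c]] //= _; case: x; by [right|left].
by case=> ->.
Qed.

Lemma Pbar_Pk k j b c : Pbark F k j b c -> Pk F k j b c.
Proof.
case=> sz [x1 [xs [H1 H2]]]; split => //; exists x1, xs; split => //.
by move: H2 => /andP[].
Qed.

Lemma Pall_bar j b x : Pbark F 1 j b [:: x] -> Pbark F 1 j b [:: ~~ x] -> Pall j b.
Proof.
move=> H1 H2; case: x H1 H2 => H1 H2 /=; apply: Pall_of; apply: Pbar_Pk => //.
Qed.

Lemma both_or_single j b x : Pbark F 1 j b [:: x] ->
  Pbark F 1 j b [:: ~~ x] \/ (exists c0, forall c, Pbark F 1 j b c <-> c = c0).
Proof.
move=> H; case: (classic (Pbark F 1 j b [:: ~~ x])) => H'; [by left|right].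
exists [:: x] => c; split; last by move=> ->.
move=> Hc; have := Hc; case=> sz _; case: c sz Hc => [|y [|z c]] //= _ Hc.
case: (boolP (y == x)) => [/eqP -> //|]; rewrite -eqbF_neg => /eqP Ey.
have Ey' : y = ~~ x by move: Ey; clear; case: x; case: y.
by case: H'; rewrite -Ey'.
Qed.

Lemma Pall_tau i s j : Pall j [::] -> ct_tau F i s = j -> Pall i (ct_f F i s).
Proof.
move=> Hj Ht; apply: Pall_of.
  have [_ [x1 [xs [H1 _]]]] := proj2 (Hj [:: false]) (or_introl erefl).
  split => //; exists s, (x1 :: xs); split; last exact: prefix_refl.
  by rewrite [fstar _ _ _]/= Ht pcat2.
have [_ [x1 [xs [H1 _]]]] := proj2 (Hj [:: true]) (or_intror erefl).
split => //; exists s, (x1 :: xs); split; last exact: prefix_refl.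
by rewrite [fstar _ _ _]/= Ht pcat2.
Qed.

End S.

Theorem lemma30 (S : finType) (HS : 1 < #|S|) (F : codeTuple S 2) :
  AIFV F ->
  (* (i) *)
  (forall c, Pk F 1 i0 [::] c <-> (c = [:: false] \/ c = [:: true])) /\
  (forall c, Pk F 1 i1 [::] c <-> (c = [:: false] \/ c = [:: true])) /\
  (* (ii) *)
  (forall (i : 'I_2) (b : bool),
      (forall s : S, ct_f F i s <> [::]) ->
      (i, b) <> (i1, false) ->
      forall c, Pk F 1 i [:: b] c <-> (c = [:: false] \/ c = [:: true])) /\
  (* (iii) *)
  (forall (i : 'I_2) (s : S),
      (exists c, Pbark F 0 i (ct_f F i s) c) ->
      forall c, Pbark F 2 i (ct_f F i s) c <-> c = [:: false; false]).
Proof.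
move=> [Hinj [Hii [Hiii [Hiv [Hv [Hvi Hvii]]]]]].
have [s0 [s1 Hs01]] : exists s0 s1 : S, s0 <> s1.
  move: HS; rewrite -cardsT => /card_gt1P [a [b [_ _ /eqP Hab]]].
  by exists a, b.
have P1 : Pall F i1 [::].
  case E: (ct_f F i1 s0) => [|x r]; first by have [] := Hv s0.
  have Hb : Pbark F 1 i1 [::] [:: x].
    split => //; exists s0, [::]; rewrite /= E; split; rewrite /pprefix /= ?eqxx ?prefix0s //.
  case: (both_or_single Hb) => [H|H]; first exact: Pall_bar Hb H.
  case: (Hvii i1 [::] H) => [[s [c [_ Hc]]]|[_ //]].
  have := Hv s; case=> H1 _; apply: False_ind; apply: H1.
  by move: Hc; case: (ct_f F i1 s).
have P0 : Pall F i0 [::].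
  have [sa [x [r Ea]]] : exists sa x r, ct_f F i0 sa = x :: r.
    case E0: (ct_f F i0 s0) => [|x r]; last by exists s0, x, r.
    case E1: (ct_f F i0 s1) => [|x r]; last by exists s1, x, r.
    by case: Hs01; apply: (Hinj i0); rewrite E0 E1.
  have Hb : Pbark F 1 i0 [::] [:: x].
    split => //; exists sa, [::]; rewrite /= Ea; split; rewrite /pprefix /= ?eqxx ?prefix0s //.
  case: (both_or_single Hb) => [H|H]; first exact: Pall_bar Hb H.
  case: (Hvii i0 [::] H) => [[s [c [_ Hc]]]|[H2 _]]; last by [].
  have Es : ct_f F i0 s = [::] by move: Hc; case: (ct_f F i0 s).
  have Ht : ct_tau F i0 s = i1.
    apply: (proj2 (Hiv i0 s)) => Hn; apply: (Hn [::]); rewrite Es.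
    split => //; exists sa, [::]; rewrite /= Ea; split; rewrite /pprefix /= ?eqxx ?prefix0s //.
  by have := Pall_tau P1 Ht; rewrite Es.
have Pj : forall j, Pall F j [::] by move=> j; case: (ord2 j) => ->.
split; first exact: P0.
split; first exact: P1.
split.
  move=> i b Hne Hib.
  have [_ [x1 [xs [H1 _]]]] := proj2 (Pj i [:: b]) (ltac:(by clear; case: b; [right|left])).
  move: H1; rewrite /=.
  case E: (ct_f F i x1) => [|y r]; first by have := Hne x1.
  rewrite /= => /andP[/eqP Eb _]; subst b.
  case: r E => [|z r] E.
    by have := Pall_tau (Pj (ct_tau F i x1)) erefl; rewrite E.
  have Hb : Pbark F 1 i [:: y] [:: z].
    split => //; exists x1, [::]; rewrite /= E cats0; split.
      by rewrite /= !eqxx ?prefix0s.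
    by apply/andP; split; [rewrite /= eqxx | apply/eqP => -[]].
  case: (both_or_single Hb) => [H|H]; first exact: Pall_bar Hb H.
  case: (Hvii i [:: y] H) => [[s [c [Hsz Hc]]]|[Hi Hy]]; last first.
    by case: Hib; rewrite Hi; case: Hy => ->.
  case: c Hsz Hc => [|w [|? ?]] // _ Hc.
    rewrite cats0 in Hc; by have := Pall_tau (Pj (ct_tau F i s)) erefl; rewrite Hc.
  have := Hne s; by case: (ct_f F i s) Hc => // ? [].
move=> i s [c0 [_ [x0 [xs0 [_ Hp0]]]]].
have key : forall x1, pprefix (ct_f F i s) (ct_f F i x1) ->
    exists r, ct_f F i x1 = ct_f F i s ++ [:: false, false & r].
  move=> x1 /andP[/prefixP [u Eu] Hneq].
  case: u Eu Hneq => [|y [|z r]] Eu Hneq.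
  - by rewrite Eu cats0 eqxx in Hneq.
  - case: y Eu => Eu.
      case: (proj1 (Hii i s)); split => //; exists x1, [::]; split.
        by rewrite /= Eu cats0 prefix_refl.
      by apply/andP; split => //; rewrite Eu prefix_prefix.
    by case: (Hiii i s x1).
  - case: y Eu => Eu.
      case: (proj1 (Hii i s)); split => //; exists x1, [::]; split.
        by rewrite /= Eu cats0 pcat2.
      by apply/andP; split => //; rewrite Eu prefix_prefix.
    case: z Eu => Eu; last by exists r.
    case: (proj2 (Hii i s)); split => //; exists x1, [::]; split.
      by rewrite /= Eu cats0 -catA pcat2 /= ?eqxx ?prefix0s.
    rewrite /pprefix Eu pcat2 /= ?prefix0s /=.
    by rewrite eqseq_cat // eqxx.
move=> c; split.
  case=> sz [x1 [xs [H1 H2]]]; have [r Er] := key x1 H2.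
  move: H1; rewrite /= Er -catA pcat2.
  by case: c sz => [|a [|b [|? ?]]] //= _ /andP[/eqP -> /andP[/eqP -> _]].
move=> ->; have [r Er] := key x0 Hp0.
split => //; exists x0, [::]; split; last by [].
by rewrite /= Er cats0 pcat2 /= ?prefix0s.
Qed.
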